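(* Let $\rho_G=U|0\rangle\langle 0|^{\otimes n}U^\dagger$ where $U$ is any element of the group generated by the unitaries $e^{\theta c_jc_k}$, $1\le j<k\le 2n$, $\theta\in\mathbb{R}$ (a pure fermionic Gaussian state). Then for $\alpha=0,\dots,2n$: $\mathcal{P}_\alpha(\rho_G)=\binom{n}{\alpha/2}/2^n$ if $\alpha$ is even, and $\mathcal{P}_\alpha(\rho_G)=0$ if $\alpha$ is odd.
   Context: On $\mathcal{H}=(\mathbb{C}^2)^{\otimes n}$ define the Majorana operators $c_{2j-1}=Z^{\otimes(j-1)}\otimes X\otimes\mathbb{1}^{\otimes(n-j)}$ and $c_{2j}=Z^{\otimes(j-1)}\otimes Y\otimes\mathbb{1}^{\otimes(n-j)}$ for $j=1,\dots,n$. For $\alpha=0,\dots,2n$, $\mathcal{L}_\alpha\subseteq\mathcal{L}(\mathcal{H})$ is the span of the products $c_{i_1}c_{i_2}\cdots c_{i_\alpha}$ with $1\le i_1<\dots<i_\alpha\le 2n$ (dimension $\binom{2n}{\alpha}$); these are the irreducible components of $\mathcal{L}(\mathcal{H})$ under conjugation by the spinor representation of $\mathbb{SO}(2n)$. Each such product is, up to a phase, a Pauli string; the orthonormal basis used consists of the Hermitian Pauli strings (up to sign) in $\mathcal{L}_\alpha$ divided by $\sqrt{2^n}$, and $\mathcal{P}_\alpha(\rho)=\sum_\mu\mathrm{Tr}[B^\mu\rho]^2$ over this basis. *)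

(* Defs.v *)
From HB Require Import structures.
From mathcomp Require Import all_boot all_order all_algebra.
From mathcomp Require Import reals trigo.
From mathcomp Require Import complex.

Set Implicit Arguments.
Unset Strict Implicit.
Unset Printing Implicit Defensive.

Import Order.TTheory GRing.Theory Num.Theory.
Local Open Scope ring_scope.
Local Open Scope complex_scope.

Section Fermions.
Variable R : realType.
Local Notation C := R[i].
Variable n : nat.

(* Computational basis of (C^2)^{\otimes n}: index i : 'I_(2^n) encodes the
   bit string with qubit q (0-indexed, q = 0 the leftmost tensor factor)
   given by bit (n-1-q) of i (big-endian Kronecker convention). *)
Definition qbit (q : 'I_n) (i : 'I_(2 ^ n)) : bool :=
  odd (i %/ 2 ^ (n.-1 - q)).

Definition sI (a b : bool) : C := if a == b then 1 else 0.
Definition sX (a b : bool) : C := if a == b then 0 else 1.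
Definition sY (a b : bool) : C :=
  if a == b then 0 else if a then 'i else - 'i.
Definition sZ (a b : bool) : C :=
  if a == b then (if a then -1 else 1) else 0.

(* Majorana operators, 0-indexed: for qubit j (0-indexed),
   maj (2j)   = Z^{(x) j} (x) X (x) 1^{(x)(n-j-1)}   (= c_{2j+1} in the paper)
   maj (2j+1) = Z^{(x) j} (x) Y (x) 1^{(x)(n-j-1)}   (= c_{2j+2} in the paper).
   The entries of the Kronecker product are written out as products of
   single-qubit entries. *)
Definition maj (a : 'I_(2 * n)) : 'M[C]_(2 ^ n) :=
  \matrix_(i, k) \prod_(q < n)
     (if (q < a./2)%N then sZ (qbit q i) (qbit q k)
      else if q == a./2 :> nat then
        (if odd a then sY (qbit q i) (qbit q k) else sX (qbit q i) (qbit q k))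
      else sI (qbit q i) (qbit q k)).

Definition majprod (S : {set 'I_(2 * n)}) : 'M[C]_(2 ^ n) :=
  foldr (fun a M => maj a *m M) 1%:M (enum S).

(* Orthonormal basis element of L_alpha attached to S (|S| = alpha):
   the Hermitian Pauli string i^{alpha(alpha-1)/2} c_S (Hermitian since
   c_S^dagger = (-1)^{alpha(alpha-1)/2} c_S), divided by sqrt(2^n). *)
Definition Bbasis (S : {set 'I_(2 * n)}) : 'M[C]_(2 ^ n) :=
  ((sqrtC (2 ^+ n))^-1 * 'i ^+ ('C(#|S|, 2))) *: majprod S.

Definition Palpha (alpha : nat) (rho : 'M[C]_(2 ^ n)) : C :=
  \sum_(S : {set 'I_(2 * n)} | #|S| == alpha) (\tr (Bbasis S *m rho)) ^+ 2.

(* e^{theta c_j c_k} for j <> k: since (c_j c_k)^2 = -1 the exponential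
   series sums to cos(theta) 1 + sin(theta) c_j c_k. *)
Definition gate (j k : 'I_(2 * n)) (theta : R) : 'M[C]_(2 ^ n) :=
  (cos theta)%:C *: 1%:M + (sin theta)%:C *: (maj j *m maj k).

(* An element of the group generated by the gates e^{theta c_j c_k}, j < k:
   a finite product of generators and their inverses.  A word is a list of
   (j, k, theta, inverted?) *)
Definition word := seq ('I_(2 * n) * 'I_(2 * n) * R * bool).

Definition word_ok (w : word) : bool :=
  all (fun g : 'I_(2 * n) * 'I_(2 * n) * R * bool => (g.1.1.1 < g.1.1.2)%N) w.

Definition word_eval (w : word) : 'M[C]_(2 ^ n) :=
  foldr (fun (g : 'I_(2 * n) * 'I_(2 * n) * R * bool) M =>
           (if g.2 then invmx (gate g.1.1.1 g.1.1.2 g.1.2)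
            else gate g.1.1.1 g.1.1.2 g.1.2) *m M) 1%:M w.

Definition in_gaussian_group (U : 'M[C]_(2 ^ n)) : Prop :=
  exists w : word, word_ok w /\ U = word_eval w.

Definition adj (U : 'M[C]_(2 ^ n)) : 'M[C]_(2 ^ n) := (map_mx conjc U)^T.

Definition zero_index : 'I_(2 ^ n) := Ordinal (expn_gt0 2 n).
Definition rho0 : 'M[C]_(2 ^ n) := delta_mx zero_index zero_index.

Definition gaussian_state (U : 'M[C]_(2 ^ n)) : 'M[C]_(2 ^ n) :=
  U *m rho0 *m adj U.

End Fermions.

(* Main.v *)
From Stdlib Require Import FunctionalExtensionality.
Require Import Defs.
From HB Require Import structures.
From mathcomp Require Import all_boot all_order all_algebra.
From mathcomp Require Import reals trigo.
From mathcomp Require Import complex.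
From mathcomp Require Import zify ring.
Import GRing.Theory Num.Theory.
Local Open Scope ring_scope.
Local Open Scope complex_scope.

Set Implicit Arguments.
Unset Strict Implicit.
Unset Printing Implicit Defensive.


Lemma bits_eq (m i k : nat) : (i < 2 ^ m)%N -> (k < 2 ^ m)%N ->
  (forall t, (t < m)%N -> odd (i %/ 2 ^ t) = odd (k %/ 2 ^ t)) -> i = k.
Proof.
elim: m i k => [|m IH] i k hi hk H.
  by rewrite expn0 in hi hk; lia.
have H0 := H 0%N (ltn0Sn _); rewrite expn0 !divn1 in H0.
have E : (i %/ 2 = k %/ 2)%N.
  apply: IH.
  - by rewrite ltn_divLR // -expnSr.
  - by rewrite ltn_divLR // -expnSr.
  move=> t ht; rewrite -!divnMA -expnS; exact: H.
by rewrite (divn_eq i 2) (divn_eq k 2) !modn2 E H0.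
Qed.

Section Work.
Variable R : realType.
Local Notation C := R[i].
Variable n : nat.

Definition mul2 (f g : bool -> bool -> C) (a b : bool) : C :=
  \sum_(c : bool) f a c * g c b.

Definition tens (F : 'I_n -> bool -> bool -> C) : 'M[C]_(2 ^ n) :=
  \matrix_(i, k) \prod_(q < n) F q (qbit q i) (qbit q k).

Definition bits (i : 'I_(2 ^ n)) : {ffun 'I_n -> bool} := [ffun q => qbit q i].

Lemma bits_inj : injective bits.
Proof.
move=> i k /ffunP H; apply: val_inj; apply: (@bits_eq n); [exact: ltn_ord | exact: ltn_ord | move=> t ht].
have hq : (n.-1 - t < n)%N by lia.
have := H (Ordinal hq); rewrite !ffunE /qbit /=.
by have -> : (n.-1 - (n.-1 - t) = t)%N by lia.
Qed.

Lemma bits_bij : bijective bits.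
Proof.
apply: (@inj_card_bij _ _ _ bits_inj).
by rewrite card_ffun card_bool card_ord card_ord.
Qed.

Lemma tensM F G : tens F *m tens G = tens (fun q => mul2 (F q) (G q)).
Proof.
apply/matrixP => i k; rewrite !mxE.
rewrite /mul2 bigA_distr_bigA /=.
rewrite (reindex bits); last by apply: onW_bij; exact: bits_bij.
apply: eq_bigr => l _; rewrite !mxE -big_split /=.
by apply: eq_bigr => q _; rewrite ffunE.
Qed.

Lemma tens1 : 1%:M = tens (fun _ => sI R).
Proof.
apply/matrixP => i k; rewrite !mxE.
case: (eqVneq i k) => [<-|ne].
  by rewrite big1 // => q _; rewrite /sI eqxx.
have [q Hq] : exists q, qbit q i != qbit q k.
  apply/existsP; apply: contraNT ne; rewrite negb_exists => /forallP Hf.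
  apply/eqP/bits_inj/ffunP => q; rewrite !ffunE.
  by apply/eqP; move: (Hf q); rewrite negbK.
by rewrite (bigD1 q) //= /sI (negbTE Hq) mul0r.
Qed.

Lemma tens_ext F G : (forall q a b, F q a b = G q a b) -> tens F = tens G.
Proof. by move=> H; apply/matrixP => i k; rewrite !mxE; apply: eq_bigr. Qed.

Definition m1 (a : 'I_(2 * n)) (q : 'I_n) (x y : bool) : C :=
  if (q < a./2)%N then sZ R x y
  else if q == a./2 :> nat then
    (if odd a then sY R x y else sX R x y)
  else sI R x y.

Lemma maj_tens a : maj R a = tens (m1 a).
Proof. by []. Qed.

Lemma adj_tens F : adj (tens F) = tens (fun q x y => (F q y x)^*).
Proof.
apply/matrixP => i k; rewrite !mxE rmorph_prod.
by apply: eq_bigr.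
Qed.

End Work.


Section Work2.
Variable R : realType.
Local Notation C := R[i].
Variable n : nat.
Local Notation mul2 := (@mul2 R).
Local Notation tens := (@tens R n).
Local Notation I2 := (sI R).
Local Notation X2 := (sX R).
Local Notation Y2 := (sY R).
Local Notation Z2 := (sZ R).
Local Notation m1 := (@m1 R n).

Definition sc2 (c : C) (f : bool -> bool -> C) (x y : bool) : C := c * f x y.

Lemma ii : 'i * 'i = -1 :> C.
Proof. by rewrite -expr2 sqr_i. Qed.

Ltac fe := apply: functional_extensionality => ?; apply: functional_extensionality => ?.
Ltac fe2 := apply: functional_extensionality; case; apply: functional_extensionality; case.
Ltac crunch := rewrite /mul2 /sc2 !big_bool;
  rewrite /sX /sY /sZ /sI /= ?(mul0r, mulr0, mul1r, mulr1, add0r, addr0,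
    mulrN, mulNr, opprK, oppr0, ii).

Lemma sc2_1 f : sc2 1 f = f.
Proof. by fe; rewrite /sc2 mul1r. Qed.
Lemma mul2_1f f : mul2 I2 f = f.
Proof. fe2; rewrite /mul2 big_bool; rewrite /sI /= ?(mul0r, mul1r, addr0, add0r) //. Qed.
Lemma mul2_f1 f : mul2 f I2 = f.
Proof. fe2; rewrite /mul2 big_bool; rewrite /sI /= ?(mulr0, mulr1, addr0, add0r) //. Qed.
Lemma mXX : mul2 X2 X2 = I2. Proof. by fe2; crunch. Qed.
Lemma mYY : mul2 Y2 Y2 = I2. Proof. by fe2; crunch. Qed.
Lemma mZZ : mul2 Z2 Z2 = I2. Proof. by fe2; crunch. Qed.
Lemma aXZ : mul2 X2 Z2 = sc2 (-1) (mul2 Z2 X2). Proof. by fe2; crunch. Qed.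
Lemma aZX : mul2 Z2 X2 = sc2 (-1) (mul2 X2 Z2). Proof. by fe2; crunch. Qed.
Lemma aYZ : mul2 Y2 Z2 = sc2 (-1) (mul2 Z2 Y2). Proof. by fe2; crunch. Qed.
Lemma aZY : mul2 Z2 Y2 = sc2 (-1) (mul2 Y2 Z2). Proof. by fe2; crunch. Qed.
Lemma aXY : mul2 X2 Y2 = sc2 (-1) (mul2 Y2 X2). Proof. by fe2; crunch. Qed.
Lemma aYX : mul2 Y2 X2 = sc2 (-1) (mul2 X2 Y2). Proof. by fe2; crunch. Qed.
Lemma cI1 f : mul2 I2 f = sc2 1 (mul2 f I2). Proof. by rewrite sc2_1 mul2_1f mul2_f1. Qed.
Lemma cI2 f : mul2 f I2 = sc2 1 (mul2 I2 f). Proof. by rewrite sc2_1 mul2_1f mul2_f1. Qed.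
Lemma cZZ : mul2 Z2 Z2 = sc2 1 (mul2 Z2 Z2). Proof. by rewrite sc2_1. Qed.


Lemma m1E (a : 'I_(2 * n)) (q : 'I_n) : m1 a q =
  if (q < a./2)%N then Z2 else if q == a./2 :> nat then
    (if odd a then Y2 else X2) else I2.
Proof. by fe; rewrite /m1; case: ifP => //; case: ifP => //; case: ifP. Qed.

Lemma tens_sc2 (s : 'I_n -> C) F :
  tens (fun q => sc2 (s q) (F q)) = (\prod_q s q) *: tens F.
Proof.
by apply/matrixP => i k; rewrite !mxE /sc2 big_split.
Qed.

Lemma half_lt (a : 'I_(2 * n)) : (a./2 < n)%N.
Proof. have := ltn_ord a; rewrite -[val a]odd_double_half; lia. Qed.

Lemma m1_anti (a b : 'I_(2 * n)) (q : 'I_n) : a != b ->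
  mul2 (m1 a q) (m1 b q) =
  sc2 (if q == minn a./2 b./2 :> nat then -1 else 1) (mul2 (m1 b q) (m1 a q)).
Proof.
move=> ab.
have hab : (a./2 == b./2 :> nat) ==> (odd a != odd b).
  apply/implyP => /eqP e; apply: contra_neq ab => o; apply: val_inj.
  by rewrite -[val a]odd_double_half -[val b]odd_double_half e o.
rewrite !m1E.
case: (ltngtP q a./2) => h1; case: (ltngtP q b./2) => h2;
  case: (boolP (q == minn a./2 b./2 :> nat)) => hm; try (exfalso; lia);
  try exact: cZZ; try exact: cI1; try exact: cI2.
- by case: (odd b); [exact: aZY | exact: aZX].
- by case: (odd a); [exact: aYZ | exact: aXZ].
- move: hab; rewrite -h1 -h2 eqxx /=.
  by case: (odd a); case: (odd b) => //= _; [exact: aYX | exact: aXY].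
Qed.

Lemma maj_anti (a b : 'I_(2 * n)) : a != b ->
  maj R a *m maj R b = - (maj R b *m maj R a).
Proof.
move=> ab; rewrite !maj_tens !tensM.
have -> : (fun q => mul2 (m1 a q) (m1 b q)) =
  (fun q => sc2 (if q == minn a./2 b./2 :> nat then -1 else 1) (mul2 (m1 b q) (m1 a q))).
  by apply: functional_extensionality => q; exact: m1_anti.
rewrite tens_sc2.
have hm : (minn a./2 b./2 < n)%N by have := half_lt a; lia.
rewrite (bigD1 (Ordinal hm)) //= eqxx big1 ?mulr1 ?scaleN1r // => q hq.
by rewrite ifF //; apply: contraNF hq => /eqP e; apply/eqP/val_inj.
Qed.

Lemma maj_sq (a : 'I_(2 * n)) : maj R a *m maj R a = 1%:M.
Proof.
rewrite maj_tens tensM tens1; apply: tens_ext => q x y; rewrite m1E.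
by case: ifP => _; [rewrite mZZ | case: ifP => _; [case: (odd a); rewrite ?mYY ?mXX | rewrite mul2_1f]].
Qed.

End Work2.


Section Lists.
Variable m : nat.
Definition ltord : rel 'I_m := fun a b => (nat_of_ord a < nat_of_ord b)%N.

Fixpoint ins (x : 'I_m) (l : seq 'I_m) : seq 'I_m :=
  match l with
  | [::] => [:: x]
  | y :: l' => if (nat_of_ord x < nat_of_ord y)%N then x :: l
               else if x == y then l' else y :: ins x l'
  end.

Lemma ltord_trans : transitive ltord.
Proof. by move=> a b c; rewrite /ltord; apply: ltn_trans. Qed.
Lemma ltord_irr : irreflexive ltord.
Proof. by move=> a; rewrite /ltord ltnn. Qed.

Lemma sortedE (y : 'I_m) l : sorted ltord (y :: l) = all (ltord y) l && sorted ltord l.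
Proof. by rewrite /= path_sortedE //; exact: ltord_trans. Qed.

Lemma mem_ins x l : sorted ltord l ->
  forall z, (z \in ins x l) = ((z == x) != (z \in l)).
Proof.
elim: l => [|y l IH]; first by move=> _ z; rewrite !inE; case: (z == x).
rewrite sortedE => /andP [/allP ay sl] z /=.
case: ifP => hxy.
  rewrite !inE; case: (eqVneq z x) => [->|nzx] /=; last by case: (z == y); case: (z \in l).
  have hnl : x \in l = false.
    by apply/negP => hl; have := ay _ hl; rewrite /ltord; lia.
  have hny : x == y = false.
    by apply/negP => /eqP e; move: hxy; rewrite e ltnn.
  by rewrite hnl hny.
case: (eqVneq x y) => [exy|nxy].
  rewrite !inE; case: (eqVneq z x) => [->|nzx] /=.
    by rewrite exy eqxx /=; apply/negP => hl; have := ay _ hl; rewrite /ltord ltnn.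
  by rewrite -exy (negbTE nzx); case: (z \in l).
rewrite !inE IH //; case: (eqVneq z y) => [->|] /=; last by case: (z == x); case: (z \in l).
by rewrite [y == x]eq_sym (negbTE nxy).
Qed.

Lemma sorted_ins x l : sorted ltord l -> sorted ltord (ins x l).
Proof.
elim: l => [|y l IH] //.
move=> sl; have := sl; rewrite sortedE => /andP [/allP ay sl'] /=.
case: ifP => hxy.
  rewrite sortedE sl andbT /= {1}/ltord hxy /=.
  by apply/allP => z hz; apply: ltord_trans (ay _ hz).
case: (eqVneq x y) => [exy|nxy] //.
rewrite sortedE IH // andbT; apply/allP => z.
rewrite mem_ins // => hz.
case: (eqVneq z x) hz => [-> _|nzx] /=; last by move=> hz; apply: ay; move: hz; case: (z \in l).
have nv : (nat_of_ord x != nat_of_ord y) by [].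
by rewrite /ltord; lia.
Qed.

Lemma sorted_enum_set (S : {set 'I_m}) : sorted ltord (enum S).
Proof.
rewrite /enum_mem -enumT; apply: sorted_filter; first exact: ltord_trans.
by have := iota_ltn_sorted 0 m; rewrite -val_enum_ord sorted_map.
Qed.

Definition tog (x : 'I_m) (S : {set 'I_m}) : {set 'I_m} :=
  if x \in S then S :\ x else x |: S.

Lemma mem_tog x S z : (z \in tog x S) = ((z == x) != (z \in S)).
Proof.
rewrite /tog; case: ifP => hx; rewrite !inE; case: (eqVneq z x) => [->|] //=;
  by rewrite ?hx //; case: (z \in S).
Qed.

Lemma enum_tog x S : enum (tog x S) = ins x (enum S).
Proof.
apply: (irr_sorted_eq ltord_trans ltord_irr).
- exact: sorted_enum_set.
- apply: sorted_ins; exact: sorted_enum_set.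
move=> z; rewrite mem_ins ?mem_enum ?mem_tog //; exact: sorted_enum_set.
Qed.

Lemma togK x : involutive (tog x).
Proof.
move=> S; apply/setP => z; rewrite !mem_tog.
by case: (z == x); case: (z \in S).
Qed.

Lemma tog_comm x y S : tog x (tog y S) = tog y (tog x S).
Proof.
apply/setP => z; rewrite !mem_tog.
by case: (z == x); case: (z == y); case: (z \in S).
Qed.

Lemma card_tog x S : (#|tog x S| + (x \in S) = #|S| + (x \notin S))%N.
Proof.
rewrite /tog; case: ifP => hx /=.
  by rewrite (cardsD1 x S) hx /= addn0 addn1 add1n.
by rewrite cardsU1 hx /=; lia.
Qed.

End Lists.


Section Maj.
Variable R : realType.
Local Notation C := R[i].
Variable n : nat.
Local Notation M := 'M[C]_(2 ^ n).
Local Notation maj := (@maj R n).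
Local Notation majprod := (@majprod R n).

Definition mpl (l : seq 'I_(2 * n)) : M := foldr (fun a A => maj a *m A) 1%:M l.
Lemma majprodE S : majprod S = mpl (enum S). Proof. by []. Qed.

Definition eps (x : 'I_(2 * n)) (S : {set 'I_(2 * n)}) : C :=
  (-1) ^+ count (fun s : 'I_(2 * n) => (nat_of_ord s < nat_of_ord x)%N) (enum S).

Lemma mpl_ins x l : sorted (@ltord _) l ->
  maj x *m mpl l = (-1) ^+ count (fun s : 'I_(2 * n) => (nat_of_ord s < nat_of_ord x)%N) l
     *: mpl (ins x l).
Proof.
elim: l => [|y l IH]; first by rewrite /= expr0 scale1r.
rewrite sortedE => /andP [/allP ay sl] /=.
have c0 : (nat_of_ord x <= nat_of_ord y)%N ->
    count (fun s : 'I_(2 * n) => (nat_of_ord s < nat_of_ord x)%N) l = 0%N.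
  move=> hxy; rewrite (eq_in_count (a2 := pred0)) ?count_pred0 // => z hz /=.
  by have := ay _ hz; rewrite /ltord; lia.
case: ifP => hxy.
  rewrite c0; last by lia.
  by rewrite (_ : (nat_of_ord y < nat_of_ord x)%N = false) ?expr0 ?scale1r //; lia.
case: (eqVneq x y) => [exy|nxy].
  rewrite -exy c0 ?ltnn ?expr0 ?scale1r //; last by rewrite exy.
  by rewrite mulmxA maj_sq mul1mx.
have hyx : (nat_of_ord y < nat_of_ord x)%N.
  by move: nxy hxy; rewrite -(inj_eq val_inj) /=; lia.
rewrite hyx mulmxA maj_anti // mulNmx -mulmxA IH // /= add1n exprS mulN1r.
by rewrite scaleNr scalemxAr.
Qed.

Lemma maj_tog x S : maj x *m majprod S = eps x S *: majprod (tog x S).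
Proof. by rewrite !majprodE mpl_ins ?sorted_enum_set // enum_tog. Qed.

Lemma mpl_rcons s a : mpl (rcons s a) = mpl s *m maj a.
Proof.
elim: s => [|b s IH] /=; first by rewrite mulmx1 mul1mx.
by rewrite IH mulmxA.
Qed.

Lemma mpl_rev l : mpl l *m mpl (rev l) = 1%:M.
Proof.
elim: l => [|a l IH] /=; first by rewrite mulmx1.
rewrite rev_cons mpl_rcons mulmxA -(mulmxA (maj a)) IH mulmx1.
exact: maj_sq.
Qed.

Lemma one_neq0 : (1%:M : M) != 0.
Proof.
apply/negP => /eqP /matrixP /(_ (zero_index n) (zero_index n)).
by rewrite !mxE eqxx /= => /eqP; rewrite oner_eq0.
Qed.

Lemma majprod_neq0 S : majprod S != 0.
Proof.
apply/negP => /eqP h; have := mpl_rev (enum S).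
rewrite -majprodE h mul0mx => /eqP; rewrite eq_sym.
by move/negbTE: one_neq0 => ->.
Qed.

Section Pair.
Variables j k : 'I_(2 * n).
Hypothesis jk : j != k.
Local Notation P := (maj j *m maj k).

Lemma PP : P *m P = - 1%:M.
Proof.
rewrite mulmxA -(mulmxA (maj j)) maj_anti 1?eq_sym // mulmxN mulNmx.
by rewrite !mulmxA maj_sq mul1mx maj_sq.
Qed.

Lemma maj_P x : maj x *m P =
  (if (x == j) || (x == k) then -1 else 1) *: (P *m maj x).
Proof.
case: (eqVneq x j) => [->|nxj] /=.
  rewrite scaleN1r mulmxA maj_sq mul1mx -mulmxA maj_anti 1?eq_sym //.
  by rewrite mulmxN opprK mulmxA maj_sq mul1mx.
case: (eqVneq x k) => [->|nxk] /=.
  rewrite scaleN1r mulmxA (@maj_anti _ _ k j) 1?eq_sym // mulNmx -mulmxA maj_sq.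
  by [].
rewrite scale1r mulmxA (@maj_anti _ _ x j) // mulNmx -!mulmxA (@maj_anti _ _ x k) //.
by rewrite mulmxN opprK.
Qed.

Lemma mpl_P l : mpl l *m P =
  (-1) ^+ count (fun x => (x == j) || (x == k)) l *: (P *m mpl l).
Proof.
elim: l => [|a l IH] /=; first by rewrite mulmx1 mul1mx expr0 scale1r.
rewrite -mulmxA IH -scalemxAr (mulmxA (maj a) P (mpl l)) maj_P -scalemxAl scalerA -(mulmxA P).
congr (_ *: _); rewrite exprD; case: ifP => _ /=.
  by rewrite expr1 mulrC.
by rewrite expr0 mulr1 mul1r.
Qed.

Definition anti (S : {set 'I_(2 * n)}) := (j \in S) != (k \in S).

Lemma majprod_P S : majprod S *m P = (if anti S then -1 else 1) *: (P *m majprod S).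
Proof.
rewrite majprodE mpl_P; congr (_ *: _).
have e1 : (count (fun x => (x == j) || (x == k)) (enum S) + 0 =
           count (pred1 j) (enum S) + count (pred1 k) (enum S))%N.
  rewrite -count_predUI; congr (_ + _)%N.
  rewrite (eq_count (a2 := pred0)) ?count_pred0 // => z /=.
  by case: (eqVneq z j) => // ->; rewrite (negbTE jk).
rewrite addn0 in e1; rewrite e1 !count_uniq_mem ?enum_uniq // !mem_enum /anti.
by case: (j \in S); case: (k \in S); rewrite /= ?expr0 ?expr1 // (sqrr_sign _ 1).
Qed.

Definition sgm (S : {set 'I_(2 * n)}) := tog j (tog k S).
Definition epsP (S : {set 'I_(2 * n)}) := eps k S * eps j (tog k S).

Lemma P_mul S : P *m majprod S = epsP S *: majprod (sgm S).
Proof. by rewrite -mulmxA maj_tog -scalemxAr maj_tog scalerA. Qed.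

Lemma sgmK : involutive sgm.
Proof. by move=> S; rewrite /sgm (tog_comm k j) !togK. Qed.

Lemma epsP_sq S : epsP S ^+ 2 = 1.
Proof. by rewrite /epsP /eps exprMn !sqrr_sign mulr1. Qed.

Lemma epsP_sgm S : epsP (sgm S) = - epsP S.
Proof.
have h : (epsP S * epsP (sgm S)) *: majprod S = - majprod S.
  have h1 : P *m (P *m majprod S) = - majprod S by rewrite mulmxA PP mulNmx mul1mx.
  by rewrite P_mul -scalemxAr P_mul sgmK scalerA in h1.
have h2 : (epsP S * epsP (sgm S) + 1) *: majprod S = 0.
  by rewrite scalerDl h scale1r addNr.
move/eqP: h2; rewrite scalemx_eq0 (negbTE (majprod_neq0 S)) orbF addr_eq0 => /eqP h3.
have : epsP S * (epsP S * epsP (sgm S)) = epsP S * (- 1) by rewrite h3.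
by rewrite mulrA -expr2 epsP_sq mul1r mulrN1.
Qed.

Lemma anti_sgm S : anti (sgm S) = anti S.
Proof.
rewrite /anti /sgm !mem_tog eqxx (eq_sym k j) (negbTE jk) /=.
by rewrite eqxx; case: (j \in S); case: (k \in S).
Qed.

Lemma card_sgm S : anti S -> #|sgm S| = #|S|.
Proof.
rewrite /anti /sgm => a.
have c1 := card_tog k S; have c2 := card_tog j (tog k S).
move: c2; rewrite mem_tog (negbTE jk) /=.
move: a c1; case: (j \in S); case: (k \in S) => //= _; lia.
Qed.

End Pair.
End Maj.


Lemma sum_rot (C : numFieldType) (I : finType) (P : pred I) (sg : I -> I)
  (w t e : I -> C) (a b : C) :
  involutive sg -> (forall i, P (sg i) = P i) -> (forall i, P i -> w (sg i) = w i) ->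
  (forall i, P i -> e i ^+ 2 = 1) -> (forall i, P i -> e (sg i) = - e i) ->
  a ^+ 2 + b ^+ 2 = 1 ->
  \sum_(i | P i) w i * (a * t i + b * e i * t (sg i)) ^+ 2 =
  \sum_(i | P i) w i * t i ^+ 2.
Proof.
move=> inv hP hw he2 he hab.
have E : forall i, P i -> w i * (a * t i + b * e i * t (sg i)) ^+ 2 =
   a ^+ 2 * (w i * t i ^+ 2) + b ^+ 2 * (w (sg i) * t (sg i) ^+ 2)
   + (2 * a * b) * (w i * e i * t i * t (sg i)).
  move=> i Pi; rewrite (hw i Pi).
  have -> : (a * t i + b * e i * t (sg i)) ^+ 2 =
     a ^+ 2 * t i ^+ 2 + b ^+ 2 * e i ^+ 2 * t (sg i) ^+ 2 + 2 * a * b * (e i * t i * t (sg i)) by ring.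
  rewrite he2 //; ring.
rewrite (eq_bigr _ E) !big_split /= -!mulr_sumr.
have R1 : \sum_(i | P i) w (sg i) * t (sg i) ^+ 2 = \sum_(i | P i) w i * t i ^+ 2.
  rewrite [RHS](reindex_inj (inv_inj inv)) /=.
  by apply: eq_bigl => i; rewrite hP.
have Z0 : \sum_(i | P i) w i * e i * t i * t (sg i) = 0.
  set Z := LHS.
  have HZ : Z = - Z.
    rewrite /Z [in LHS](reindex_inj (inv_inj inv)) /= -sumrN.
    rewrite [in LHS](eq_bigl P); last by move=> i; rewrite hP.
    apply: eq_bigr => i Pi; rewrite inv (hw _ Pi) (he _ Pi); ring.
  have : Z *+ 2 = 0 by rewrite mulr2n {1}HZ addNr.
  by move/eqP; rewrite mulrn_eq0 /= => /eqP.
by rewrite R1 Z0 mulr0 addr0 -mulrDl hab mul1r.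
Qed.

Section Gate.
Variable R : realType.
Local Notation C := R[i].
Variable n : nat.
Local Notation M := 'M[C]_(2 ^ n).
Local Notation maj := (@maj R n).
Local Notation majprod := (@majprod R n).
Variables j k : 'I_(2 * n).
Hypothesis jk : j != k.
Local Notation P := (maj j *m maj k).
Local Notation anti := (@anti n j k).
Local Notation sgm := (@sgm n j k).
Local Notation epsP := (@epsP R n j k).

Lemma mulAB (a b c d : C) : (a *: 1%:M + b *: P) *m (c *: 1%:M + d *: P) =
  (a * c - b * d) *: 1%:M + (a * d + b * c) *: (P : M).
Proof.
rewrite mulmxDl !mulmxDr -!scalemxAl -!scalemxAr !mul1mx !mulmx1 (@PP R n j k jk) !scalerA.
by apply/matrixP => x y; rewrite !mxE; ring.
Qed.

Lemma cS_g (a b : C) S : majprod S *m (a *: 1%:M + b *: P) =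
  (a *: 1%:M + (if anti S then - b else b) *: P) *m majprod S.
Proof.
rewrite mulmxDr -scalemxAr mulmx1 -scalemxAr (@majprod_P R n j k jk) scalerA.
rewrite mulmxDl -scalemxAl mul1mx -scalemxAl.
by case: (anti S); rewrite ?mulrN1 ?mulr1.
Qed.

Variables cc ss : C.
Hypothesis hcs : cc ^+ 2 + ss ^+ 2 = 1.
Local Notation g := (cc *: 1%:M + ss *: P : M).
Local Notation h := (cc *: 1%:M + (- ss) *: P : M).

Lemma hg : h *m g = 1%:M.
Proof.
rewrite mulAB.
have -> : cc * cc - - ss * ss = 1 by rewrite -hcs; ring.
have -> : cc * ss + - ss * cc = 0 by ring.
by rewrite scale1r scale0r addr0.
Qed.

Lemma conjS S : h *m majprod S *m g =
  if anti S then (cc ^+ 2 - ss ^+ 2) *: majprod S +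
     (- (2 * cc * ss) * epsP S) *: majprod (sgm S)
  else majprod S.
Proof.
rewrite -mulmxA cS_g; case: (anti S).
  rewrite mulmxA mulAB mulmxDl -!scalemxAl mul1mx (@P_mul R n j k) scalerA.
  congr (_ *: _ + _ *: _); ring.
by rewrite mulmxA hg mul1mx.
Qed.

Lemma tr_conj M0 S : \tr (majprod S *m (g *m M0 *m h)) =
  if anti S then (cc ^+ 2 - ss ^+ 2) * \tr (majprod S *m M0) +
     (- (2 * cc * ss) * epsP S) * \tr (majprod (sgm S) *m M0)
  else \tr (majprod S *m M0).
Proof.
rewrite !mulmxA mxtrace_mulC !mulmxA conjS.
case: (anti S) => //.
by rewrite mulmxDl mxtraceD -!scalemxAl !mxtraceZ.
Qed.

End Gate.


Section Inv.
Variable R : realType.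
Local Notation C := R[i].
Variable n : nat.
Local Notation M := 'M[C]_(2 ^ n).
Local Notation maj := (@maj R n).
Local Notation majprod := (@majprod R n).

Definition kap (S : {set 'I_(2 * n)}) : C := (sqrtC (2 ^+ n))^-1 * 'i ^+ 'C(#|S|, 2).

Lemma PalphaE a (X : M) : Palpha a X =
  \sum_(S : {set 'I_(2 * n)} | #|S| == a) kap S ^+ 2 * (\tr (majprod S *m X)) ^+ 2.
Proof.
by apply: eq_bigr => S _; rewrite /Bbasis -scalemxAl mxtraceZ exprMn.
Qed.

Lemma adjE (A : M) x y : adj A x y = (A y x)^*.
Proof. by rewrite /adj !mxE. Qed.

Lemma adj_mul (A B : M) : adj (A *m B) = adj B *m adj A.
Proof. by rewrite /adj map_mxM trmx_mul. Qed.

Lemma adjm1 : adj (1%:M : M) = 1%:M.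
Proof. by rewrite /adj map_mx1 trmx1. Qed.

Lemma conj_i : ('i)^* = - 'i :> C.
Proof. by apply/eqP; rewrite eq_complex /= oppr0 !eqxx. Qed.

Lemma adj_maj a : adj (maj a) = maj a.
Proof.
rewrite maj_tens adj_tens; apply: tens_ext => q x y; rewrite /m1.
case: ifP => _; [|case: ifP => _; [case: (odd a)|]];
  case: x; case: y; rewrite /sZ /sY /sX /sI /= ?conjc0 ?conjc1 ?rmorphN ?conjc1 ?conj_i ?opprK //.
all: by apply/eqP; rewrite eq_complex /= ?oppr0 ?opprK ?eqxx.
Qed.

Section Pair2.
Variables j k : 'I_(2 * n).
Hypothesis jk : j != k.
Local Notation P := (maj j *m maj k).

Lemma adjP : adj P = - P.
Proof. by rewrite adj_mul !adj_maj (@maj_anti R n) // eq_sym. Qed.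

Lemma gateN (th : R) : gate j k (- th) = (cos th)%:C *: 1%:M + (- (sin th)%:C) *: P.
Proof. by rewrite /gate cosN sinN rmorphN. Qed.

Lemma hcs_th (th : R) : (cos th)%:C ^+ 2 + (sin th)%:C ^+ 2 = 1 :> C.
Proof. by rewrite -!rmorphXn -rmorphD cos2Dsin2 rmorph1. Qed.

Lemma adj_gate (th : R) : adj (gate j k th) = gate j k (- th).
Proof.
rewrite gateN /gate; have := adjP; move: (maj j *m maj k) => p hp.
apply/matrixP => x y; have hxy := congr1 (fun A : M => A x y) hp.
rewrite /= adjE mxE in hxy.
rewrite adjE !mxE rmorphD !rmorphM /= !oppr0 conjc_nat hxy mulrN mulNr eq_sym.
by [].
Qed.

Lemma inv_gate (th : R) : invmx (gate j k th) = gate j k (- th).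
Proof.
have h : gate j k th *m gate j k (- th) = 1%:M.
  rewrite gateN /gate mulAB //.
  have -> : (cos th)%:C * (cos th)%:C - (sin th)%:C * - (sin th)%:C = 1.
    by rewrite -(hcs_th th); ring.
  have -> : (cos th)%:C * - (sin th)%:C + (sin th)%:C * (cos th)%:C = 0 by ring.
  by rewrite scale1r scale0r addr0.
have [u _] := mulmx1_unit h.
by rewrite -[RHS]mul1mx -(mulVmx u) -mulmxA h mulmx1.
Qed.

Lemma Palpha_gate a (th : R) (M0 : M) :
  Palpha a (gate j k th *m M0 *m gate j k (- th)) = Palpha a M0.
Proof.
rewrite gateN /gate !PalphaE (bigID (@anti n j k)) [RHS](bigID (@anti n j k)) /=.
have hcs := hcs_th th.
congr (_ + _).
  rewrite (eq_bigr (fun S => kap S ^+ 2 *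
     (((cos th)%:C ^+ 2 - (sin th)%:C ^+ 2) * \tr (majprod S *m M0) +
     (- (2 * (cos th)%:C * (sin th)%:C)) * @epsP R n j k S *
        \tr (majprod (@sgm n j k S) *m M0)) ^+ 2)); last first.
    by move=> S /andP [_ an]; rewrite tr_conj // an.
  apply: (sum_rot (sg := @sgm n j k)).
  - exact: sgmK.
  - move=> S; rewrite anti_sgm //; case an: (@anti n j k S); rewrite ?andbF ?andbT //.
    by rewrite card_sgm.
  - by move=> S /andP [_ an]; rewrite /kap card_sgm.
  - by move=> S _; exact: epsP_sq.
  - by move=> S _; exact: epsP_sgm.
  - have -> : ((cos th)%:C ^+ 2 - (sin th)%:C ^+ 2) ^+ 2 +
       (- (2 * (cos th)%:C * (sin th)%:C)) ^+ 2 =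
       ((cos th)%:C ^+ 2 + (sin th)%:C ^+ 2) ^+ 2 by ring.
    by rewrite hcs expr1n.
apply: eq_bigr => S /andP [_ an].
by rewrite tr_conj // (negbTE an).
Qed.

End Pair2.
End Inv.


Section Base.
Variable R : realType.
Local Notation C := R[i].
Variable n : nat.
Local Notation M := 'M[C]_(2 ^ n).
Local Notation maj := (@maj R n).
Local Notation majprod := (@majprod R n).
Local Notation mul2 := (@mul2 R).
Local Notation tens := (@tens R n).
Local Notation z0 := (zero_index n).

Lemma tr_rho0 (A : M) : \tr (A *m rho0 R n) = A z0 z0.
Proof.
rewrite /mxtrace (bigD1 z0) //= big1 ?addr0 => [|i ne].
  rewrite !mxE (bigD1 z0) //= big1 ?addr0 => [|l nl]; first by rewrite !mxE eqxx mulr1.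
  by rewrite !mxE (negbTE nl) mulr0.
rewrite !mxE big1 // => l _; rewrite !mxE.
by rewrite [i == _](negbTE ne) andbF mulr0.
Qed.

Definition pf (q : 'I_n) (l : seq 'I_(2 * n)) : bool -> bool -> C :=
  foldr (fun a f => mul2 (m1 R a q) f) (sI R) l.

Lemma mpl_tens l : mpl R l = tens (fun q => pf q l).
Proof.
elim: l => [|a l IH] /=; first exact: tens1.
by rewrite IH maj_tens tensM.
Qed.

Lemma qbit0 (q : 'I_n) : qbit q z0 = false.
Proof. by rewrite /qbit /= div0n. Qed.

Definition m1n (a : nat) (q : 'I_n) : bool -> bool -> C :=
  if (q < a./2)%N then sZ R else if q == a./2 :> nat then
    (if odd a then sY R else sX R) else sI R.

Lemma m1_n a q : m1 R a q = m1n a q.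
Proof. by rewrite m1E. Qed.

Definition pS (S : {set 'I_(2 * n)}) (x : nat) : bool :=
  if insub x is Some a then a \in S else false.

Definition pfn (q : 'I_n) (l : seq nat) : bool -> bool -> C :=
  foldr (fun a f => mul2 (m1n a q) f) (sI R) l.

Lemma pf_enum q (S : {set 'I_(2 * n)}) : pf q (enum S) = pfn q [seq x <- iota 0 (2 * n) | pS S x].
Proof.
have -> : [seq x <- iota 0 (2 * n) | pS S x] = map val (enum S).
  rewrite -val_enum_ord filter_map; congr map; rewrite enumT /enum_mem.
  by apply: eq_filter => a /=; rewrite /pS valK.
rewrite /pf /pfn foldr_map; congr foldr.
by apply: functional_extensionality => a; rewrite m1_n.
Qed.


Definition pfi (q : 'I_n) (l : seq nat) (G : bool -> bool -> C) : bool -> bool -> C :=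
  foldr (fun a f => mul2 (m1n a q) f) G l.

Lemma pfi_low (q : 'I_n) l G : all (fun x => (x < 2 * q)%N) l -> pfi q l G = G.
Proof.
elim: l => [|x l IH] //= /andP [hx hl]; rewrite IH //.
have -> : m1n x q = sI R.
  rewrite /m1n ifF; last by rewrite -[x]odd_double_half in hx *; lia.
  by rewrite ifF //; apply/negbTE; rewrite -[x]odd_double_half in hx *; lia.
exact: mul2_1f.
Qed.

Lemma pfi_high (q : 'I_n) l : all (fun x => (2 * q + 2 <= x)%N) l ->
  pfi q l (sI R) false false = 1 /\ pfi q l (sI R) true false = 0.
Proof.
elim: l => [|x l IH] /=; first by rewrite /sI.
move=> /andP [hx hl]; have [h1 h2] := IH hl.
have -> : m1n x q = sZ R.
  by rewrite /m1n ifT //; rewrite -[x]odd_double_half in hx *; lia.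
rewrite /mul2 !big_bool /sZ /= h1 h2.
by split; rewrite ?mulr0 ?mul0r ?mulr1 ?addr0 ?add0r.
Qed.

Lemma m1n_ev (q : 'I_n) : m1n (2 * q) q = sX R.
Proof.
rewrite /m1n (_ : (2 * q)./2 = q) ?ltnn ?eqxx; last by rewrite mul2n doubleK.
by rewrite oddM.
Qed.

Lemma m1n_od (q : 'I_n) : m1n (2 * q).+1 q = sY R.
Proof.
rewrite /m1n (_ : ((2 * q).+1)./2 = q) ?ltnn ?eqxx; last first.
  by rewrite mul2n -[(q.*2).+1]/(odd true + q.*2)%N half_bit_double.
by rewrite /= oddM.
Qed.

Definition gq (S : {set 'I_(2 * n)}) (q : 'I_n) : C :=
  if pS S (2 * q) then (if pS S (2 * q).+1 then 'i else 0)
  else (if pS S (2 * q).+1 then 0 else 1).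

Lemma pfn_00 (S : {set 'I_(2 * n)}) (q : 'I_n) :
  pfn q [seq x <- iota 0 (2 * n) | pS S x] false false = gq S q.
Proof.
have e : (2 * n = 2 * q + (2 + (2 * n - (2 * q + 2))))%N by have := ltn_ord q; lia.
rewrite e iotaD iotaD !filter_cat /pfn !foldr_cat add0n.
set G3 := foldr _ (sI R) _.
have [h1 h2] : G3 false false = 1 /\ G3 true false = 0.
  apply: pfi_high; apply/allP => x; rewrite mem_filter mem_iota.
  by case/andP => _; lia.
rewrite -/(pfi q _ _) pfi_low; last first.
  by apply/allP => x; rewrite mem_filter mem_iota; case/andP => _; lia.
rewrite /= /gq.
case: (pS S (2 * q)); case: (pS S (2 * q).+1) => /=;
  rewrite ?m1n_ev ?m1n_od /mul2 ?big_bool /sX /sY /= ?h1 ?h2 ?big_bool /=;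
  by rewrite ?(mulr0, mul0r, mulr1, mul1r, addr0, add0r).
Qed.


Lemma ev_lt (q : 'I_n) : (2 * q < 2 * n)%N.
Proof. by have := ltn_ord q; lia. Qed.
Lemma od_lt (q : 'I_n) : ((2 * q).+1 < 2 * n)%N.
Proof. by have := ltn_ord q; lia. Qed.
Definition ev (q : 'I_n) : 'I_(2 * n) := Ordinal (ev_lt q).
Definition od (q : 'I_n) : 'I_(2 * n) := Ordinal (od_lt q).

Lemma pS_ev S (q : 'I_n) : pS S (2 * q) = (ev q \in S).
Proof. by rewrite /pS -[(2 * q)%N]/(val (ev q)) valK. Qed.
Lemma pS_od S (q : 'I_n) : pS S (2 * q).+1 = (od q \in S).
Proof. by rewrite /pS -[(2 * q).+1]/(val (od q)) valK. Qed.

Lemma majprod00 S : majprod S z0 z0 = \prod_q gq S q.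
Proof.
rewrite majprodE mpl_tens mxE; apply: eq_bigr => q _.
by rewrite qbit0 pf_enum pfn_00.
Qed.

Definition hq (S : {set 'I_(2 * n)}) (q : 'I_n) : C :=
  if ev q \in S then (if od q \in S then -1 else 0)
  else (if od q \in S then 0 else 1).

Lemma gq2 S q : gq S q ^+ 2 = hq S q.
Proof.
rewrite /gq /hq pS_ev pS_od.
by case: (ev q \in S); case: (od q \in S); rewrite ?sqr_i ?expr0n ?expr1n.
Qed.

Definition pairs (T : {set 'I_n}) : {set 'I_(2 * n)} := ev @: T :|: od @: T.
Definition halfP (S : {set 'I_(2 * n)}) : {set 'I_n} := [set q | ev q \in S].

Lemma ev_inj : injective ev.
Proof. by move=> q q' /(congr1 val) /= e; apply: val_inj => /=; lia. Qed.
Lemma od_inj : injective od.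
Proof. by move=> q q' /(congr1 val) /= e; apply: val_inj => /=; lia. Qed.
Lemma ev_od (q q' : 'I_n) : ev q != od q'.
Proof. by apply/negP => /eqP /(congr1 val) /=; lia. Qed.

Lemma mem_pairs_ev T q : (ev q \in pairs T) = (q \in T).
Proof.
rewrite in_setU mem_imset; last exact: ev_inj.
case: (q \in T) => //=; apply/imsetP => [[q' _ e]].
by move: (ev_od q q'); rewrite e eqxx.
Qed.
Lemma mem_pairs_od T q : (od q \in pairs T) = (q \in T).
Proof.
rewrite in_setU (mem_imset _ _ od_inj) orbC.
case: (q \in T) => //=; apply/imsetP => [[q' _ e]].
by move: (ev_od q' q); rewrite -e eqxx.
Qed.

Lemma halfPK T : halfP (pairs T) = T.
Proof. by apply/setP => q; rewrite inE mem_pairs_ev. Qed.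

Lemma card_pairs T : #|pairs T| = (2 * #|T|)%N.
Proof.
rewrite cardsU !card_imset ?(ev_inj, od_inj) //.
rewrite (_ : ev @: T :&: od @: T = set0) ?cards0; first by rewrite subn0 addnn mul2n.
apply/setP => x; rewrite !inE; apply/negP => /andP [/imsetP [q _ ->] /imsetP [q' _ e]].
by move: (ev_od q q'); rewrite e eqxx.
all: by [exact: od_inj | exact: ev_inj].
Qed.

Definition hf (x : 'I_(2 * n)) : 'I_n := Ordinal (half_lt x).

Lemma decomp (x : 'I_(2 * n)) : x = if odd x then od (hf x) else ev (hf x).
Proof.
apply: val_inj; case: ifP => ox /=; rewrite -{1}[val x]odd_double_half ox /=; lia.
Qed.

Lemma prod_hq_pairs T : \prod_q hq (pairs T) q = (-1) ^+ #|T|.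
Proof.
rewrite -prodr_const (big_mkcond (fun q => q \in T)) /=.
by apply: eq_bigr => q _; rewrite /hq mem_pairs_ev mem_pairs_od; case: (q \in T).
Qed.

Lemma prod_hq_0 S : S != pairs (halfP S) -> \prod_q hq S q = 0.
Proof.
move=> ne.
have [x hx] : exists x, (x \in S) != (x \in pairs (halfP S)).
  apply/existsP; apply: contraNT ne; rewrite negb_exists => /forallP Hf.
  apply/eqP/setP => x; move: (Hf x); rewrite negbK => /eqP //.
rewrite (bigD1 (hf x)) //= (_ : hq S (hf x) = 0) ?mul0r //.
move: hx; rewrite [in X in X -> _](decomp x); case: ifP => ox.
  rewrite mem_pairs_od inE /hq.
  by case: (ev (hf x) \in S); case: (od (hf x) \in S).
by rewrite mem_pairs_ev inE eqxx.
Qed.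

Lemma sum_hq a : \sum_(S : {set 'I_(2 * n)} | #|S| == a) \prod_q hq S q =
  \sum_(T : {set 'I_n} | (2 * #|T|)%N == a) (-1) ^+ #|T|.
Proof.
rewrite (bigID (fun S => S == pairs (halfP S))) /= [X in _ + X]big1 ?addr0; last first.
  by move=> S /andP [_ ne]; exact: prod_hq_0.
rewrite (reindex_onto pairs halfP); last by move=> S /andP [_ /eqP <-].
apply: eq_big => T; first by rewrite halfPK !eqxx !andbT card_pairs.
by move=> _; rewrite prod_hq_pairs.
Qed.


Lemma bin2_parity m : odd ('C(m.*2, 2) + m) = false.
Proof.
rewrite bin2 -doubleMl doubleK.
case: m => [|m] //.
by rewrite oddD oddM doubleS /= odd_double andbT addbb.
Qed.

Lemma Palpha_rho0 a : Palpha a (rho0 R n) =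
  if odd a then 0 else 'C(n, a./2)%:R / 2 ^+ n.
Proof.
rewrite PalphaE.
set K := (sqrtC (2 ^+ n))^-1 * 'i ^+ 'C(a, 2) : C.
rewrite (eq_bigr (fun S => K ^+ 2 * \prod_q hq S q)); last first.
  move=> S /eqP hS; rewrite tr_rho0 majprod00 /kap hS -prodrXl.
  by congr (_ * _); apply: eq_bigr => q _; rewrite gq2.
rewrite -mulr_sumr sum_hq.
case: ifP => ho.
  rewrite big_pred0 ?mulr0 // => T; apply/negbTE; apply/eqP => e.
  by move: ho; rewrite -e oddM.
set m := a./2.
have ha : a = (2 * m)%N by rewrite -[a]odd_double_half ho mul2n.
rewrite (eq_bigl (fun T => T \in [set T : {set 'I_n} | #|T| == m])); last first.
  by move=> T; rewrite inE /= ha eqn_pmul2l.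
rewrite (eq_bigr (fun _ => (-1) ^+ m)); last by move=> T; rewrite inE => /eqP ->.
rewrite sumr_const card_draws card_ord.
have hs : (-1) ^+ 'C(a, 2) * (-1) ^+ m = 1 :> C.
  by rewrite -exprD -signr_odd ha mul2n bin2_parity expr0.
have hK : K ^+ 2 = (2 ^+ n)^-1 * (-1) ^+ 'C(a, 2).
  by rewrite /K exprMn exprVn sqrtCK -exprM mulnC exprM sqr_i.
rewrite hK mulrnAr -mulrA hs mulr1 -mulr_natr mulrC.
by [].
Qed.

End Base.


Lemma gs_mul (R : realType) (n : nat) (G W : 'M[R[i]]_(2 ^ n)) :
  gaussian_state (G *m W) = G *m gaussian_state W *m adj G.
Proof. by rewrite /gaussian_state adj_mul !mulmxA. Qed.

Lemma gs_word (R : realType) (n : nat) (w : word R n) : word_ok w ->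
  forall a, Palpha a (gaussian_state (word_eval w)) = Palpha a (rho0 R n).
Proof.
elim: w => [|g w IH] /=.
  by move=> _ a; rewrite /gaussian_state adjm1 mul1mx mulmx1.
case: g => [[[j k] th] b] /= /andP [hjk hw] a.
have jk : j != k by apply/eqP => e; move: hjk; rewrite e ltnn.
rewrite gs_mul -(IH hw a).
case: b.
  by rewrite inv_gate // adj_gate // Palpha_gate.
by rewrite adj_gate // Palpha_gate.
Qed.

Unset Implicit Arguments.

Theorem mainTheorem8 (R : realType) (n : nat) (U : 'M[R[i]]_(2 ^ n)) :
  in_gaussian_group U ->
  forall alpha : nat, (alpha <= 2 * n)%N ->
    Palpha alpha (gaussian_state U) =
    (if odd alpha then 0 else 'C(n, alpha./2)%:R / 2 ^+ n).
Proof.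
case=> w [hw ->] alpha _.
by rewrite gs_word // Palpha_rho0.
Qed.
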